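(* If $\Gamma$ is a Deza graph with parameters $(n,k,k-1,a)$, $k > 1$, and $\beta = 1$, then $\Gamma$ can be obtained either from Construction 1 or from Construction 2 (both described in the context below).
   Context: A Deza graph with parameters $(n,k,b,a)$ is a $k$-regular graph on $n$ vertices in which any two distinct vertices have either $a$ or $b$ ($a\le b$) common neighbours. For a vertex $v$, $\beta$ denotes the number of vertices $u$ with $|N(v)\cap N(u)|=b$; this number does not depend on $v$. Both constructions start from a strongly regular graph $\Delta$ with parameters $(m,\ell,\lambda,\mu)$ where $\lambda=\mu-1$, with adjacency matrix $B$. Construction 1: $\Gamma_1$ is the strong product of $K_2$ and $\Delta$, i.e. its adjacency matrix is $A_1 = B\otimes J_2 - I_{2m}$ ($J_2$ the $2\times 2$ all-ones matrix, $I_{2m}$ the identity matrix). It is a strictly Deza graph with parameters $(n,k,k-1,a)$ and $\beta=1$, where $n=2m$, $k=2\ell+1$, $a=2\mu$. Construction 2: assume $\Delta$ has an involutive automorphism that interchanges only non-adjacent vertices, with permutation matrix $P$. Let $P_1=P\otimes I_2$ and $A_2=P_1A_1$. Equivalently: take the strong product of $K_2$ with the graph of adjacency matrix $PB$ (dual Seidel switching of $\Delta$), and for every transposition $(x~y)$ of the involution, with corresponding vertex pairs $x',x''$ and $y',y''$, delete the edges $\{x',x''\}$, $\{y',y''\}$ and insert the edges $\{x',y''\}$, $\{x'',y'\}$. The resulting graph $\Gamma_2$ (adjacency matrix $A_2$, with $A_2^2=A_1^2$) is a strictly Deza graph with parameters $(n,k,k-1,a)$ and $\beta=1$, where $n=2m$,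 $k=2\ell+1$, $a=2\mu$. *)

(* Defs.v *)
From mathcomp Require Import all_boot all_order all_fingroup.
Set Implicit Arguments.
Unset Strict Implicit.
Unset Printing Implicit Defensive.

Section Graphs.
Variable T : finType.

Definition simple_graph (e : rel T) : Prop :=
  symmetric e /\ irreflexive e.

Definition nbhd (e : rel T) (v : T) : {set T} := [set w | e v w].
Definition common (e : rel T) (u v : T) : nat := #|nbhd e u :&: nbhd e v|.

Definition deza_graph (e : rel T) (n k b a : nat) : Prop :=
  [/\ simple_graph e, #|T| = n, a <= b,
      forall v, #|nbhd e v| = k &
      forall u v, u != v -> common e u v = a \/ common e u v = b].

Definition deza_beta (e : rel T) (b beta : nat) : Prop :=
  forall v, #|[set u | (u != v) && (common e v u == b)]| = beta.

Definition srg (e : rel T) (m l lam mu : nat) : Prop :=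
  [/\ simple_graph e, #|T| = m,
      forall v, #|nbhd e v| = l,
      forall u v, u != v -> e u v -> common e u v = lam &
      forall u v, u != v -> ~~ e u v -> common e u v = mu].

Definition nonadj_involution (e : rel T) (s : {perm T}) : Prop :=
  [/\ forall x y, e (s x) (s y) = e x y,
      forall x, s (s x) = x &
      forall x, s x != x -> ~~ e x (s x)].

(* Construction 1: strong product K_2 [x] Delta, adjacency (B+I)(x)J_2 - I.
   Vertex (x,i) with x in Delta and i in bool (the two vertices of K_2). *)
Definition constr1 (e : rel T) : rel (T * bool) :=
  fun p q => ((p.1 == q.1) || e p.1 q.1) && (p != q).

(* Construction 2: adjacency A_2 = P_1 A_1 with P_1 = P (x) I_2, where P is
   the permutation matrix of s: A_2[(x,i),(y,j)] = A_1[(s x,i),(y,j)]. *)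
Definition constr2 (e : rel T) (s : {perm T}) : rel (T * bool) :=
  fun p q => constr1 e (s p.1, p.2) q.

End Graphs.

Definition isomorphic (T U : finType) (e : rel T) (f : rel U) : Prop :=
  exists g : T -> U, bijective g /\ forall u v, f (g u) (g v) = e u v.

(* Main.v *)
Require Import Defs.
From mathcomp Require Import all_boot all_order all_fingroup.
From mathcomp Require Import zify.
From Stdlib Require Import Lia.

Set Implicit Arguments.
Unset Strict Implicit.
Unset Printing Implicit Defensive.

Section Main.
Variables (T : finType) (e : rel T) (n k a : nat).
Hypotheses (Hd : deza_graph e n k k.-1 a) (Hk : 1 < k) (Hb : deza_beta e k.-1 1).
Variable v0 : T.

Notation c := (common e).
Notation N := (nbhd e).

Lemma e_sym : symmetric e. Proof. by case: Hd => [[]]. Qed.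
Lemma eirr : irreflexive e. Proof. by case: Hd => [[]]. Qed.
Lemma Nk v : #|N v| = k. Proof. by case: Hd. Qed.
Lemma Hc u v : u != v -> c u v = a \/ c u v = k.-1. Proof. by case: Hd => _ _ _ _; apply. Qed.
Lemma Hak : a <= k.-1. Proof. by case: Hd. Qed.

Lemma commonC u v : c u v = c v u. Proof. by rewrite /common setIC. Qed.
Lemma commonii v : c v v = k. Proof. by rewrite /common setIid Nk. Qed.

Definition Sset v := [set u | (u != v) && (c v u == k.-1)].
Definition sig v := odflt v [pick u in Sset v].

Lemma Sset1 v : exists x, Sset v = [set x].
Proof. apply/cards1P; by rewrite /Sset Hb. Qed.

Lemma sigP v : sig v \in Sset v.
Proof.
have [x Hx] := Sset1 v.
rewrite /sig; case: pickP => [y //| H0].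
by have := H0 x; rewrite Hx set11.
Qed.

Lemma sig_uniq v u : u \in Sset v -> u = sig v.
Proof.
have [x Hx] := Sset1 v => Hu.
have := sigP v; rewrite Hx inE => /eqP ->.
by move: Hu; rewrite Hx inE => /eqP.
Qed.

Lemma sig_neq v : sig v != v.
Proof. by have := sigP v; rewrite inE => /andP[]. Qed.

Lemma c_sig v : c v (sig v) = k.-1.
Proof. by have := sigP v; rewrite inE => /andP[_ /eqP]. Qed.

Lemma sigK v : sig (sig v) = v.
Proof.
apply/esym/sig_uniq; rewrite inE eq_sym sig_neq /= commonC c_sig //.
Qed.

Lemma sig_inj : injective sig. Proof. exact: can_inj sigK. Qed.

Lemma a_lt : a < k.-1.
Proof.
rewrite ltn_neqAle Hak andbT; apply/eqP => Ea.
have: N v0 \subset Sset v0.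
  apply/subsetP => u; rewrite inE => Hu.
  have Hne : u != v0 by apply: contraTneq Hu => ->; rewrite eirr.
  rewrite inE Hne /=; case: (Hc (v:=u) (u:=v0)); rewrite 1?eq_sym //; move=> ->; by rewrite ?Ea.
move/subset_leq_card; rewrite Nk.
have [x ->] := Sset1 v0; rewrite cards1; lia.
Qed.

Lemma c_other v u : u != v -> u != sig v -> c v u = a.
Proof.
move=> H1 H2; case: (Hc (u:=v) (v:=u)); rewrite 1?eq_sym // => E.
case/negP: H2; apply/eqP/sig_uniq; by rewrite inE H1 E eqxx.
Qed.

Lemma c_formula u w : c u w = a + (k - a) * (u == w) + (k.-1 - a) * (u == sig w).
Proof.
have ha := a_lt.
case: (eqVneq u w) => [->|Huw].
  rewrite commonii eq_sym (negbTE (sig_neq w)); lia.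
case: (eqVneq u (sig w)) => [->|Hus].
  rewrite commonC c_sig; lia.
rewrite commonC c_other //; lia.
Qed.

Lemma card_sum (P : pred T) : #|[set x | P x]| = \sum_x P x.
Proof. by rewrite -sum1dep_card big_mkcond. Qed.

Lemma common_sum u w : c u w = \sum_x (e u x * e w x).
Proof.
rewrite /common.
have -> : N u :&: N w = [set x | e u x && e w x] by apply/setP => x; rewrite !inE.
rewrite card_sum; apply: eq_bigr => x _; by rewrite mulnb.
Qed.

Lemma sum_pred1 (F : T -> nat) w : \sum_u F u * (u == w) = F w.
Proof.
rewrite (bigD1 w) //= eqxx muln1 big1 ?addn0 // => u /negbTE ->; by rewrite muln0.
Qed.

Lemma walk3 v w : \sum_u e v u * c u w = \sum_u e w u * c v u.
Proof.
under eq_bigr => u _ do rewrite common_sum big_distrr.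
under [RHS]eq_bigr => u _ do rewrite common_sum big_distrr.
rewrite [RHS]exchange_big /=.
apply: eq_bigr => u _; apply: eq_bigr => x _.
rewrite (e_sym x u); nia.
Qed.

Lemma sum_formula v w z X Y :
  \sum_u e v u * (a + X * (u == w) + Y * (u == z)) = k * a + X * e v w + Y * e v z.
Proof.
under eq_bigr => u _ do rewrite !mulnDr.
rewrite !big_split /= -big_distrl /=.
have -> : \sum_u e v u = k by rewrite -card_sum Nk.
under eq_bigr => u _ do rewrite mulnCA.
rewrite -big_distrr sum_pred1 /=.
under eq_bigr => u _ do rewrite mulnCA.
rewrite -big_distrr sum_pred1 /=; lia.
Qed.

Lemma F2 v w : e v (sig w) = e (sig v) w.
Proof.
have := walk3 v w.
under eq_bigr => u _ do rewrite c_formula.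
under [RHS]eq_bigr => u _ do rewrite commonC c_formula.
rewrite !sum_formula (e_sym w v) (e_sym w (sig v)).
have ha := a_lt.
case: (e v (sig w)); case: (e (sig v) w) => //=; lia.
Qed.

Lemma sig_e u w : e (sig u) (sig w) = e u w.
Proof. by rewrite -F2 sigK. Qed.


Definition DD u := N (sig u) :\: N u.

Lemma DD1 u : exists q, DD u = [set q].
Proof.
apply/cards1P; rewrite /DD cardsD Nk setIC -/(common e u (sig u)) c_sig.
apply/eqP; lia.
Qed.

Lemma DD_eq u q : q \in DD u -> DD u = [set q].
Proof. have [x Hx] := DD1 u; rewrite Hx inE => /eqP ->; done. Qed.

Definition phi u := if e u (sig u) then u else odflt u [pick q in DD u].

Lemma phiDD u : phi u \in DD u.
Proof.
rewrite /phi; case: ifP => H.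
  by rewrite !inE eirr e_sym H.
have [x Hx] := DD1 u.
case: pickP => [y //| H0].
by have := H0 x; rewrite Hx set11.
Qed.

Lemma DDphi u : DD u = [set phi u].
Proof. exact: DD_eq (phiDD u). Qed.

Lemma phi_e1 u : e (phi u) (sig u).
Proof. by have := phiDD u; rewrite /DD !inE => /andP[_]; rewrite e_sym. Qed.

Lemma phi_e0 u : e (phi u) u = false.
Proof. by have := phiDD u; rewrite /DD !inE => /andP[/negbTE]; rewrite e_sym. Qed.

Lemma phiA u : e u (sig u) -> phi u = u.
Proof. by rewrite /phi => ->. Qed.

Lemma DDsig u : DD (sig u) = N u :\: N (sig u).
Proof. by rewrite /DD sigK. Qed.

Lemma phi_sig u : phi (sig u) = sig (phi u).
Proof.
have : sig (phi u) \in DD (sig u).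
  by rewrite DDsig !inE sig_e F2 (e_sym u) phi_e0 (e_sym (sig u)) phi_e1.
by rewrite DDphi inE => /eqP.
Qed.

Lemma card_I1 (C : {set T}) x : #|C :&: [set x]| = (x \in C).
Proof.
case: (boolP (x \in C)) => h.
  have -> : C :&: [set x] = [set x].
    by apply/setP => z; rewrite !inE; case: (eqVneq z x) => [->|]; rewrite ?h ?andbT ?andbF.
  by rewrite cards1.
have -> : C :&: [set x] = set0.
  by apply/setP => z; rewrite !inE; case: (eqVneq z x) => [->|]; rewrite ?(negbTE h) ?andbT ?andbF.
by rewrite cards0.
Qed.

Lemma GL (A B C : {set T}) x y :
  A :\: B = [set x] -> B :\: A = [set y] ->
  #|C :&: A| + (y \in C) = #|C :&: B| + (x \in C).
Proof.
move=> HA HB.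
rewrite -(cardsID B (C :&: A)) -(cardsID A (C :&: B)).
have -> : (C :&: A) :\: B = C :&: [set x] by rewrite -HA; apply/setP => z; rewrite !inE; case: (z \in A); case: (z \in B); case: (z \in C).
have -> : (C :&: B) :\: A = C :&: [set y] by rewrite -HB; apply/setP => z; rewrite !inE; case: (z \in A); case: (z \in B); case: (z \in C).
have -> : C :&: B :&: A = C :&: A :&: B by rewrite -!setIA (setIC B).
rewrite !card_I1; lia.
Qed.

Lemma phiK u : phi (phi u) = u.
Proof.
case: (boolP (e u (sig u))) => H; first by rewrite !phiA.
set p := phi u.
have Hp1 : e (sig u) p by rewrite e_sym phi_e1.
have Hp0 : e u p = false by rewrite e_sym phi_e0.
have Hpu : p != u by apply/eqP => Epu; move: Hp1; rewrite Epu e_sym (negbTE H).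
have Hpsu : p != sig u by apply: contraTneq Hp1 => ->; rewrite eirr.
have HB : e p (sig p) = false.
  have := GL (N p) (etrans (esym (DDsig u)) (DDphi (sig u))) (DDphi u).
  rewrite -/(common e p u) -/(common e p (sig u)) phi_sig -/p !inE.
  rewrite commonC c_other // commonC c_other //; last by rewrite sigK.
  rewrite eirr; lia.
have : u \in DD p by rewrite /DD !inE -F2 (e_sym p u) Hp0 (e_sym p (sig u)) Hp1.
by rewrite DDphi inE => /eqP ->.
Qed.

Lemma phi_inj : injective phi. Proof. exact: can_inj phiK. Qed.

Lemma agree u q : q != phi u -> q != sig (phi u) -> e u q = e (sig u) q.
Proof.
move=> H1 H2.
have D1 := DDphi u.
have D2 := DDphi (sig u); rewrite DDsig phi_sig in D2.
case E1: (e u q); case E2: (e (sig u) q) => //.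
  have : q \in [set sig (phi u)] by rewrite -D2 !inE E1 E2.
  by rewrite inE (negbTE H2).
have : q \in [set phi u] by rewrite -D1 !inE E1 E2.
by rewrite inE (negbTE H1).
Qed.

Definition H x q := e (phi x) q.

Lemma HP3 x : H x x = false. Proof. exact: phi_e0. Qed.
Lemma HP4 x : H x (sig x). Proof. exact: phi_e1. Qed.
Lemma HP5 x q : q != x -> q != sig x -> H x (sig q) = H x q.
Proof.
move=> H1 H2; rewrite /H F2 -agree //; by rewrite phiK.
Qed.
Lemma HsL x q : H (sig x) q = H x (sig q).
Proof. by rewrite /H phi_sig F2. Qed.


Lemma n1 x : (sig x == x) = false. Proof. exact: negbTE (sig_neq x). Qed.
Lemma n2 v : (phi v == sig v) = false.
Proof. apply/negbTE/eqP => E; have := phi_e1 v; by rewrite E eirr. Qed.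

Lemma n3 v : (sig (phi v) == v) = false.
Proof. apply/negbTE/eqP => E; have := n2 v; by rewrite -{2}E sigK eqxx. Qed.

Definition O v : {set T} := [set v; sig v; phi v; sig (phi v)].
Definition r v := odflt v [pick z in O v].

Lemma rP v : r v \in O v.
Proof.
rewrite /r; case: pickP => [y //| H0].
by have := H0 v; rewrite !inE eqxx.
Qed.

Lemma r_eq v w : O v = O w -> r v = r w.
Proof.
move=> E; rewrite /r E; case: pickP => // H0.
by have := H0 w; rewrite !inE eqxx.
Qed.

Lemma r_phi v : r (phi v) = r v.
Proof.
apply: r_eq; apply/setP => z; rewrite !inE phiK.
by case: (z == v); case: (z == sig v); case: (z == phi v); case: (z == sig (phi v)).
Qed.

Lemma r_sig v : r (sig v) = r v.
Proof.
apply: r_eq; apply/setP => z; rewrite !inE phi_sig !sigK.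
by case: (z == v); case: (z == sig v); case: (z == phi v); case: (z == sig (phi v)).
Qed.

Definition b v := (v == r v) || (phi v == r v).

Lemma b_phi v : b (phi v) = b v.
Proof. by rewrite /b r_phi phiK orbC. Qed.

Lemma b_sig v : b (sig v) = ~~ b v.
Proof.
rewrite /b r_sig phi_sig.
have := rP v; rewrite !inE -!orbA; case/or4P => /eqP ->; rewrite ?eqxx.
- by rewrite n1 n3.
- by rewrite (eq_sym v) n1 n2.
- by rewrite (eq_sym (sig v)) n2 n1 orbT.
- by rewrite orbT (eq_sym v) n3 (eq_sym (phi v)) n1.
Qed.

Definition Bset := [set v | b v].

Lemma half (S : {set T}) : (forall q, q \in S -> sig q \in S) -> #|S| = (#|S :&: Bset|).*2.
Proof.
move=> HS.
rewrite -(cardsID Bset S).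
have -> : S :\: Bset = sig @: (S :&: Bset).
  apply/setP => z; rewrite !inE; apply/idP/idP.
    case/andP => Hb1 Hz; apply/imsetP; exists (sig z); last by rewrite sigK.
    by rewrite !inE HS // b_sig Hb1.
  case/imsetP => y; rewrite !inE => /andP[Hy1 Hy2] ->.
  by rewrite HS // b_sig Hy2.
by rewrite card_imset ?addnn //; exact: sig_inj.
Qed.

Lemma card_I2 (A : {set T}) p q : p != q -> #|A :&: [set p; q]| = (p \in A) + (q \in A).
Proof.
move=> Hpq.
have -> : A :&: [set p; q] = (A :&: [set p]) :|: (A :&: [set q]) by rewrite -setIUr.
rewrite cardsU !card_I1.
have -> : A :&: [set p] :&: (A :&: [set q]) = set0.
  apply/setP => z; rewrite !inE; case: (eqVneq z p) => [->|]; rewrite ?andbF ?andbT //.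
  by rewrite (negbTE Hpq) !andbF.
by rewrite cards0 subn0.
Qed.

Definition W' x y := [set q | H x q && H y q && (q != sig x) && (q != sig y)].

Lemma CL x y : y != x -> y != sig x ->
  a = (#|W' x y :&: Bset|).*2 + H x y + H y x.
Proof.
move=> H1 H2.
have H3 : x != sig y by apply: contraNneq H2 => ->; rewrite sigK.
have Ha : c (phi x) (phi y) = a.
  apply: c_other; first by rewrite (inj_eq phi_inj).
  by rewrite -phi_sig (inj_eq phi_inj).
rewrite -Ha /common.
set W := N (phi x) :&: N (phi y).
have Hs : sig x != sig y by rewrite (inj_eq sig_inj) eq_sym.
rewrite -(cardsID [set sig x; sig y] W) card_I2 //.
have -> : W :\: [set sig x; sig y] = W' x y.
  by apply/setP => z; rewrite !inE -!andbA; do ! case: (_ == _); rewrite ?andbF ?andbT.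
rewrite -half.
  rewrite !inE -/(H x (sig x)) -/(H y (sig x)) -/(H x (sig y)) -/(H y (sig y)) !HP4.
  have E1 : H y (sig x) = H y x by rewrite HP5 // eq_sym.
  have E2 : H x (sig y) = H x y by rewrite HP5.
  rewrite E1 E2 ?andbT /=; lia.
move=> q; rewrite !inE => /andP[/andP[/andP[Hx Hy] Hqx] Hqy].
have Hqx' : q != x by apply: contraTneq Hx => ->; rewrite HP3.
have Hqy' : q != y by apply: contraTneq Hy => ->; rewrite HP3.
have E1 : H x (sig q) = H x q by rewrite HP5.
have E2 : H y (sig q) = H y q by rewrite HP5.
by rewrite E1 E2 Hx Hy !(inj_eq sig_inj) Hqx' Hqy'.
Qed.

Lemma Hsym x y : H x y = H y x.
Proof.
case: (eqVneq y x) => [->//|H1].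
case: (eqVneq y (sig x)) => [->|H2].
  by rewrite HsL HP4.
case: (boolP [exists v, phi v != v]) => [/existsP [v Hv]|].
  have E1 : H v (phi v) = false by rewrite /H eirr.
  have E2 : H (phi v) v = false by rewrite /H phiK eirr.
  have := CL Hv (negbT (n2 v)); rewrite E1 E2 !addn0.
  have := CL H1 H2.
  case: (H x y); case: (H y x) => //=; lia.
rewrite negb_exists => /forallP Hall.
have E z : phi z = z by apply/eqP; have := Hall z; rewrite negbK.
by rewrite /H !E e_sym.
Qed.


Definition rho v := if b v then v else sig v.

Lemma rhoB v : rho v \in Bset.
Proof. rewrite /rho inE; case: ifP => // Hv; by rewrite b_sig Hv. Qed.

Definition x0B := rhoB v0.
Definition ev (i : 'I_#|Bset|) : T := enum_val i.
Definition rk (v : T) : 'I_#|Bset| := enum_rank_in x0B v.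

Lemma evB i : b (ev i).
Proof. have := enum_valP i; by rewrite inE. Qed.
Lemma rkK v : v \in Bset -> ev (rk v) = v.
Proof. exact: enum_rankK_in. Qed.
Lemma evK i : rk (ev i) = i.
Proof. exact: enum_valK_in. Qed.
Lemma ev_inj : injective ev.
Proof. exact: can_inj evK. Qed.

Definition eD (i j : 'I_#|Bset|) := (i != j) && H (ev i) (ev j).
Definition sf i := rk (phi (ev i)).

Lemma phiB i : phi (ev i) \in Bset.
Proof. by rewrite inE b_phi evB. Qed.

Lemma sf_inj : injective sf.
Proof.
move=> i j E; apply: ev_inj; apply: phi_inj.
by rewrite -(rkK (phiB i)) -(rkK (phiB j)) -/(sf i) E.
Qed.

Definition s := perm sf_inj.

Lemma ev_s i : ev (s i) = phi (ev i).
Proof. by rewrite permE /sf rkK // phiB. Qed.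

Definition g v := (rk (rho v), ~~ b v).

Lemma transfer (P : pred T) : #|[set j | P (ev j)]| = #|[set q in Bset | P q]|.
Proof.
rewrite -(card_imset _ ev_inj); apply: eq_card => q.
apply/imsetP/idP.
  by case=> j; rewrite !inE => Hj ->; rewrite evB.
rewrite !inE => /andP[Hq HP]; exists (rk q); last by rewrite rkK // inE.
by rewrite inE rkK // inE.
Qed.

Lemma B_sig x q : b x -> b q -> q != sig x.
Proof. move=> Hx Hq; apply: contraTneq Hq => ->; by rewrite b_sig Hx. Qed.

Lemma nb_card i : (#|nbhd eD i|).*2 = k.-1.
Proof.
set x := ev i.
have -> : #|nbhd eD i| = #|[set j | (fun q => (x != q) && H x q) (ev j)]|.
  by apply: eq_card => j; rewrite !inE /eD (inj_eq ev_inj).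
rewrite (transfer (fun q => (x != q) && H x q)).
set S := N (phi x) :\: [set sig x].
have -> : [set q in Bset | (x != q) && H x q] = S :&: Bset.
  apply/setP => q; rewrite !inE /H.
  case Bq: (b q); rewrite ?andbF ?andbT //=.
  rewrite (B_sig (evB i) Bq) /=.
  case: (eqVneq x q) => [<-|//]; by rewrite phi_e0.
rewrite -half.
  rewrite cardsD Nk card_I1 inE phi_e1; lia.
move=> q; rewrite !inE => /andP[Hq1 Hq2].
have Hqx : q != x by apply: contraTneq Hq2 => ->; rewrite phi_e0.
rewrite (inj_eq sig_inj) Hqx /=.
have := HP5 Hqx Hq1; rewrite /H => ->; done.
Qed.

Lemma common_W i j : i != j -> common eD i j = #|W' (ev i) (ev j) :&: Bset|.
Proof.
move=> Hij; set x := ev i; set y := ev j.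
rewrite /common.
have -> : #|nbhd eD i :&: nbhd eD j| =
   #|[set w | (fun q => ((x != q) && H x q) && ((y != q) && H y q)) (ev w)]|.
  by apply: eq_card => w; rewrite !inE /eD !(inj_eq ev_inj).
rewrite (transfer (fun q => ((x != q) && H x q) && ((y != q) && H y q))).
apply: eq_card => q; rewrite !inE.
case Bq: (b q); rewrite ?andbF ?andbT //=.
rewrite (B_sig (evB i) Bq) (B_sig (evB j) Bq) !andbT.
case: (eqVneq x q) => [<-|_]; first by rewrite HP3.
case: (eqVneq y q) => [<-|_]; first by rewrite HP3 andbF.
done.
Qed.

Lemma common_a i j : i != j -> a = (common eD i j).*2 + 2 * eD i j.
Proof.
move=> Hij; rewrite common_W // /eD Hij /=.
have Hne : ev j != ev i by rewrite (inj_eq ev_inj) eq_sym.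
rewrite (CL Hne (B_sig (evB i) (evB j))) (Hsym (ev j)); lia.
Qed.


Lemma rho_phi v : rho (phi v) = phi (rho v).
Proof. rewrite /rho b_phi; case: (b v) => //; by rewrite phi_sig. Qed.

Lemma s_g v : s (rk (rho v)) = rk (rho (phi v)).
Proof. by rewrite permE /sf rkK ?rhoB // rho_phi. Qed.

Lemma rk_eq u w : (rk (rho u) == rk (rho w)) = (rho u == rho w).
Proof.
apply/eqP/eqP => [E|->//].
by rewrite -(rkK (rhoB u)) E rkK // rhoB.
Qed.

Lemma rho_eq u w : (rho u == rho w) = (w == u) || (w == sig u).
Proof.
rewrite /rho; case Bu: (b u); case Bw: (b w).
- have -> : (w == sig u) = false.
    by apply/negbTE; apply: contraTneq Bw => ->; rewrite b_sig Bu.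
  by rewrite orbF eq_sym.
- have -> : (w == u) = false by apply/negbTE; apply: contraFneq Bw => ->.
  by rewrite /= -(inj_eq sig_inj) sigK eq_sym.
- have -> : (w == u) = false by apply/negbTE; apply: contraTneq Bw => ->; rewrite Bu.
  by rewrite /= eq_sym.
- have -> : (w == sig u) = false.
    by apply/negbTE; apply: contraFneq Bw => ->; rewrite b_sig Bu.
  by rewrite orbF (inj_eq sig_inj) eq_sym.
Qed.

Lemma g_eq u w : (g u == g w) = (u == w).
Proof.
rewrite /g xpair_eqE rk_eq rho_eq.
case: (eqVneq w u) => [->|Hwu]; first by rewrite !eqxx.
rewrite /=.
case: (eqVneq w (sig u)) => [->|//].
by rewrite b_sig; case: (b u).
Qed.

Lemma H_rho u w : w != u -> w != sig u -> H (rho u) (rho w) = H u w.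
Proof.
move=> H1 H2; rewrite /rho; case: (b u); case: (b w) => //.
- by rewrite HP5.
- by rewrite HsL HP5.
- by rewrite HsL sigK.
Qed.

Lemma iso_e v w : constr2 eD s (g v) (g w) = e v w.
Proof.
rewrite /constr2 /constr1 /=.
set u := phi v.
have -> : e v w = H u w by rewrite /H /u phiK.
have -> : s (rk (rho v)) = rk (rho u).
  by rewrite s_g.
have -> : ~~ b v = ~~ b u by rewrite /u b_phi.
rewrite -/(g u) /eD !rkK ?rhoB // rk_eq rho_eq g_eq.
case: (eqVneq w u) => [->|H1]; first by rewrite /= (HP3 u).
case: (eqVneq w (sig u)) => [->|H2]; first by rewrite /= (HP4 u).
by rewrite /= andbT H_rho.
Qed.

Definition h (p : 'I_#|Bset| * bool) := if p.2 then sig (ev p.1) else ev p.1.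

Lemma g_bij : bijective g.
Proof.
exists h.
  move=> v; rewrite /h /g /= rkK ?rhoB // /rho.
  by case: (b v) => //=; rewrite sigK.
case=> i cb; rewrite /h /g /=; case: cb.
  by rewrite /rho b_sig evB /= sigK evK.
by rewrite /rho evB /= evK.
Qed.

Lemma main_ne : exists (m : nat) (eD : rel 'I_m) (l lam mu : nat) (s : {perm 'I_m}),
      [/\ srg eD m l lam mu, lam.+1 = mu, nonadj_involution eD s
        & isomorphic e (constr2 eD s)].
Proof.
pose i0 := rk (rho v0).
have Hn := nb_card i0.
have : 0 < #|nbhd eD i0| by move: Hn; case: #|nbhd eD i0| => //= H0; lia.
case/card_gt0P => j0; rewrite inE => Hj0.
have Hij0 : i0 != j0 by move: Hj0; rewrite /eD => /andP[].
have Ea := common_a Hij0; rewrite Hj0 in Ea.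
exists #|Bset|, eD, k.-1./2, (a./2).-1, a./2, s.
split.
- split.
  + split => [i j | i]; last by rewrite /eD eqxx.
    by rewrite /eD eq_sym Hsym.
  + by rewrite card_ord.
  + by move=> v; rewrite -(nb_card v) doubleK.
  + move=> u v Huv Huv'; have := common_a Huv; rewrite Huv' /=; lia.
  + move=> u v Huv Huv'; have := common_a Huv; rewrite (negbTE Huv') /=; lia.
- lia.
- split.
  + move=> i j; rewrite /eD (inj_eq (@perm_inj _ s)) !ev_s.
    by rewrite /H phiK e_sym -/(H (ev j) (ev i)) Hsym.
  + by move=> i; apply: ev_inj; rewrite !ev_s phiK.
  + by move=> i _; rewrite /eD ev_s /H eirr andbF.
- exists g; split; first exact: g_bij.
  by move=> u v; rewrite iso_e.
Qed.

End Main.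


Theorem theorem2 (T : finType) (e : rel T) (n k a : nat) :
  deza_graph e n k k.-1 a -> 1 < k -> deza_beta e k.-1 1 ->
  (exists (m : nat) (eD : rel 'I_m) (l lam mu : nat),
      [/\ srg eD m l lam mu, lam.+1 = mu & isomorphic e (constr1 eD)])
  \/
  (exists (m : nat) (eD : rel 'I_m) (l lam mu : nat) (s : {perm 'I_m}),
      [/\ srg eD m l lam mu, lam.+1 = mu, nonadj_involution eD s
        & isomorphic e (constr2 eD s)]).
Proof.
move=> Hd Hk Hb; right.
case: (pickP (@predT T)) => [v0 _ | H0].
  exact: main_ne Hd Hk Hb v0.
exists 0, (fun _ _ => false), 0, 0, 1, 1%g.
have T0 : forall v : T, False by move=> v; have := H0 v.
have I0 : forall i : 'I_0, False by case.
split.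
- split.
  + by split.
  + by rewrite card_ord.
  + by move=> v; case: (I0 v).
  + by move=> u; case: (I0 u).
  + by move=> u; case: (I0 u).
- done.
- by split => [x|x|x]; case: (I0 x).
- exists (fun v => match T0 v with end); split.
    apply: inj_card_bij; first by move=> x; case: (T0 x).
    rewrite card_prod card_ord /=.
    done.
  by move=> u; case: (T0 u).
Qed.
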